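(* Let $q=q_n$ be the transpose top with random measure on $S_n$, $u=u_n$ the uniform measure on $S_n$, and $h_t=h_{q,t}$ the associated continuous time law. For any sequence of nonnegative reals $(k_n)$ such that $(k_n-n\log n)/n\to-\infty$ as $n\to\infty$, we have $d_2(h_{k_n},u)\to\infty$ and $\|h_{k_n}-u\|_{TV}\to 1$.
   Context: The transpose top with random measure on $S_n$ is $q(\tau)=1/n$ if $\tau=(1,j)$, $1\le j\le n$ (with $(1,1)=e$), and $0$ otherwise. $q^{(k)}$ is the $k$-fold convolution power and $h_{q,t}=e^{-t}\sum_{k\ge0}\frac{t^k}{k!}q^{(k)}$. $d_2(p,u)=\big(|G|\sum_{x\in G}|p(x)-u(x)|^2\big)^{1/2}$ and $\|p-u\|_{TV}=\sup_{A\subset G}(p(A)-u(A))$. *)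

(* Defs.v *)
From mathcomp Require Import all_boot all_fingroup.
From Stdlib Require Import Reals ClassicalEpsilon.
Set Implicit Arguments. Unset Strict Implicit. Unset Printing Implicit Defensive.

Local Open Scope R_scope.

(* S_n acting on {0,...,n-1}; position 0 plays the role of "1" *)
Notation Sn n := {perm 'I_n}.

Definition rsum (T : finType) (f : T -> R) : R := \big[Rplus/R0]_(x : T) f x.

(* transpose top with random: q(tau) = 1/n if tau = (1 j), (1 1) = e, else 0 *)
Definition q_ttr (n : nat) (x : Sn n) : R :=
  if [exists i : 'I_n, exists j : 'I_n, (nat_of_ord i == 0%nat) && (x == tperm i j)]
  then / INR n else 0.

Definition unif (n : nat) (x : Sn n) : R := / INR (#|[set: Sn n]|).

Definition conv (n : nat) (p r : Sn n -> R) (x : Sn n) : R :=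
  rsum (fun y : Sn n => p y * r (y^-1 * x)%g).

Definition delta1 (n : nat) (x : Sn n) : R := if x == 1%g then 1 else 0.

Fixpoint convpow (n : nat) (p : Sn n -> R) (k : nat) : Sn n -> R :=
  match k with
  | O => @delta1 n
  | S k' => conv (convpow p k') p
  end.

Definition heat (n : nat) (p : Sn n -> R) (t : R) (x : Sn n) : R :=
  epsilon (inhabits 0) (fun l => infinite_sum
     (fun k => exp (- t) * (t ^ k / INR (Factorial.fact k)) * convpow p k x) l).

Definition dist2 (T : finType) (p u : T -> R) : R :=
  sqrt (INR #|[set: T]| * rsum (fun x => Rsqr (Rabs (p x - u x)))).

(* total variation: sup over subsets A of (p(A) - u(A)); G finite, so a max over all A *)
Definition msr (T : finType) (p : T -> R) (A : {set T}) : R :=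
  rsum (fun x => if x \in A then p x else 0).

Definition tv (T : finType) (p u : T -> R) : R :=
  foldr Rmax (msr p set0 - msr u set0)
    (map (fun A : {set T} => msr p A - msr u A) (enum [set: {set T}])).

(* Main.v *)
Require Import Defs.
From HB Require Import structures.
From mathcomp Require Import all_boot all_fingroup.
From Stdlib Require Import Reals Lra Psatz ClassicalEpsilon.
Set Implicit Arguments. Unset Strict Implicit.
Local Open Scope R_scope.

HB.instance Definition _ := Monoid.isComLaw.Build R R0 Rplus (fun x y z => esym (Rplus_assoc x y z)) Rplus_comm Rplus_0_l.

Lemma rsum_ext (T : finType) (f g : T -> R) : (forall x, f x = g x) -> rsum f = rsum g.
Proof. move=> H; rewrite /rsum; apply: eq_bigr => x _; exact: H. Qed.

Lemma rsum_add (T : finType) (f g : T -> R) : rsum (fun x => f x + g x) = rsum f + rsum g.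
Proof. by rewrite /rsum big_split. Qed.

Lemma rsum_scal (T : finType) (c : R) (f : T -> R) : rsum (fun x => c * f x) = c * rsum f.
Proof.
rewrite /rsum; apply: (big_rec2 (fun a b => a = c * b)); first by rewrite Rmult_0_r.
by move=> x a b _ ->; rewrite Rmult_plus_distr_l.
Qed.

Lemma rsum_le (T : finType) (f g : T -> R) : (forall x, f x <= g x) -> rsum f <= rsum g.
Proof.
move=> H; rewrite /rsum; apply: (big_rec2 (fun a b => a <= b)); first lra.
move=> x a b _ hab; have := H x; lra.
Qed.

Lemma rsum_const (T : finType) (c : R) : rsum (fun _ : T => c) = INR #|T| * c.
Proof.
rewrite /rsum big_const; elim: #|T| => [|m IH] /=; first by rewrite Rmult_0_l.
rewrite IH; case: m {IH} => [|m] /=; lra.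
Qed.

Lemma rsum_swap (T U : finType) (f : T -> U -> R) :
  rsum (fun x => rsum (fun y => f x y)) = rsum (fun y => rsum (fun x => f x y)).
Proof. rewrite /rsum; exact: exchange_big. Qed.

Lemma rsum_pred1 (T : finType) (j : T) (c : R) :
  rsum (fun i => if i == j then c else 0) = c.
Proof.
rewrite /rsum (bigD1 j) //= eqxx big1 ?Rplus_0_r // => i /negbTE ->; done.
Qed.

Lemma rsum_reindex (T : finType) (h : T -> T) (f : T -> R) : bijective h ->
  rsum (fun x => f (h x)) = rsum f.
Proof.
move=> hb; rewrite /rsum; symmetry; exact: (reindex h (onW_bij _ hb)).
Qed.

Lemma rsum_nonneg (T : finType) (f : T -> R) : (forall x, 0 <= f x) -> 0 <= rsum f.
Proof. move=> H; have := @rsum_le _ (fun _ => 0) f H; by rewrite rsum_const Rmult_0_r. Qed.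

Definition tau (n : nat) (j : 'I_n.+1) : Sn n.+1 := tperm ord0 j.

Arguments tau {n}.
Lemma tau_inj n : injective (@tau n).
Proof. move=> i j /(congr1 (fun s : Sn n.+1 => s ord0)); by rewrite /tau !tpermL. Qed.

Lemma q_ttrE n (z : Sn n.+1) :
  q_ttr z = if z \in [set tau j | j in [set: 'I_n.+1]] then / INR n.+1 else 0.
Proof.
rewrite /q_ttr; congr (if _ then _ else _).
apply/existsP/imsetP => [[i /existsP [j /andP [/eqP hi /eqP ->]]]|[j _ ->]].
  exists j => //; rewrite /tau; congr tperm; exact: val_inj.
by exists ord0; apply/existsP; exists j; rewrite /= eqxx.
Qed.

Lemma q_ttr_sum n (h : Sn n.+1 -> R) :
  rsum (fun z => q_ttr z * h z) = / INR n.+1 * rsum (fun j => h (tau j)).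
Proof.
rewrite -rsum_scal.
have -> : rsum (fun j => / INR n.+1 * h (tau j)) =
   \big[Rplus/R0]_(z in [set tau j | j in [set: 'I_n.+1]]) (/ INR n.+1 * h z).
  rewrite big_imset; last by move=> x y _ _; apply: tau_inj.
  by rewrite /rsum; apply: eq_bigl => j; rewrite inE.
rewrite big_mkcond /rsum; apply: eq_bigr => z _; rewrite q_ttrE.
by case: ifP => _; rewrite ?Rmult_0_l.
Qed.

Lemma rsum_scalr (T : finType) (c : R) (f : T -> R) : rsum (fun x => f x * c) = rsum f * c.
Proof. rewrite Rmult_comm -rsum_scal; apply: rsum_ext => x; apply: Rmult_comm. Qed.

Lemma conv_step n (p : Sn n.+1 -> R) (g : Sn n.+1 -> R) :
  rsum (fun x => conv p (@q_ttr n.+1) x * g x) =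
  rsum (fun y => p y * (/ INR n.+1 * rsum (fun j => g (y * tau j)%g))).
Proof.
rewrite /conv.
rewrite (@rsum_ext _ _ (fun x => rsum (fun y => p y * (q_ttr (y^-1 * x)%g * g x)))); last first.
  move=> x; rewrite -rsum_scalr; apply: rsum_ext => y; lra.
rewrite rsum_swap; apply: rsum_ext => y.
rewrite rsum_scal; congr (_ * _).
rewrite -(q_ttr_sum (fun z => g (y * z)%g)).
rewrite -(@rsum_reindex _ (fun z => y * z)%g); last first.
  by exists (fun z => y^-1 * z)%g => z; rewrite ?mulKg ?mulKVg.
by apply: rsum_ext => z; rewrite mulKg.
Qed.

Arguments INR : simpl never.

Definition Ek n k (g : Sn n.+1 -> R) := rsum (fun x => convpow (@q_ttr n.+1) k x * g x).

Fixpoint W n k (g : Sn n.+1 -> {set 'I_n.+1} -> R) (s : Sn n.+1) (S : {set 'I_n.+1}) : R :=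
  match k with
  | O => g s S
  | k'.+1 => / INR n.+1 * rsum (fun j => W k' g (s * tau j)%g (j |: S))
  end.

Definition step n (g : Sn n.+1 -> {set 'I_n.+1} -> R) s S :=
  / INR n.+1 * rsum (fun j => g (s * tau j)%g (j |: S)).

Lemma W_ext n k (f g : Sn n.+1 -> {set 'I_n.+1} -> R) :
  (forall s S, f s S = g s S) -> forall s S, W k f s S = W k g s S.
Proof.
move=> H; elim: k => [|k IH] s S //=; congr (_ * _); apply: rsum_ext => j; exact: IH.
Qed.

Lemma W_last n k (g : Sn n.+1 -> {set 'I_n.+1} -> R) s S :
  W k.+1 g s S = W k (step g) s S.
Proof.
elim: k s S => [|k IH] s S //=; congr (_ * _); apply: rsum_ext => j; exact: IH.
Qed.

Lemma Ek_W n k (g : Sn n.+1 -> R) : Ek k g = W k (fun s _ => g s) 1%g set0.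
Proof.
elim: k g => [|k IH] g.
  rewrite /Ek /= /delta1 -(rsum_pred1 (1%g : Sn n.+1) (g 1%g)); apply: rsum_ext => x.
  by case: eqP => [->|_]; lra.
rewrite W_last /Ek /= conv_step -/(Ek k _) IH; apply: W_ext => s S //.
Qed.

Lemma INR_pos n : 0 < INR n.+1.
Proof. apply: lt_0_INR; lia. Qed.

Lemma W_mono n k (Inv : Sn n.+1 -> {set 'I_n.+1} -> Prop) (f g : Sn n.+1 -> {set 'I_n.+1} -> R) :
  (forall s S j, Inv s S -> Inv (s * tau j)%g (j |: S)) ->
  (forall s S, Inv s S -> f s S <= g s S) ->
  forall s S, Inv s S -> W k f s S <= W k g s S.
Proof.
move=> Hinv H; elim: k => [|k IH] s S hI //=; first exact: H.
apply: Rmult_le_compat_l.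
  apply: Rlt_le; apply: Rinv_0_lt_compat; exact: INR_pos.
apply: rsum_le => j; apply: IH; exact: Hinv.
Qed.

Lemma W_add n k (f g : Sn n.+1 -> {set 'I_n.+1} -> R) s S :
  W k (fun s S => f s S + g s S) s S = W k f s S + W k g s S.
Proof.
elim: k s S => [|k IH] s S //=.
rewrite (rsum_ext (fun j => IH _ _)) rsum_add; rewrite Rmult_plus_distr_l.
reflexivity.
Qed.

Lemma W_scal n k (a : R) (f : Sn n.+1 -> {set 'I_n.+1} -> R) s S :
  W k (fun s S => a * f s S) s S = a * W k f s S.
Proof.
elim: k s S => [|k IH] s S //=.
rewrite (rsum_ext (fun j => IH _ _)) rsum_scal -Rmult_assoc (Rmult_comm _ a) Rmult_assoc; reflexivity.
Qed.


Lemma W_const n k (c : R) (s : Sn n.+1) S : W k (fun _ _ => c) s S = c.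
Proof.
elim: k s S => [|k IH] s S //=.
rewrite (rsum_ext (fun j => IH _ _)) rsum_const card_ord.
have := INR_pos n; move=> h; field; lra.
Qed.

Definition dlt n (S : {set 'I_n.+1}) (i : 'I_n.+1) : R :=
  if (i != ord0) && (i \notin S) then 1 else 0.
Definition NS n (S : {set 'I_n.+1}) : R := rsum (dlt S).

Lemma rsum_sub (T : finType) (f g : T -> R) : rsum (fun x => f x - g x) = rsum f - rsum g.
Proof.
rewrite (rsum_ext (g := fun x => f x + (-1) * g x)); last by move=> x; ring.
rewrite rsum_add rsum_scal; ring.
Qed.

Lemma NS_add n (j : 'I_n.+1) S : NS (j |: S) = NS S - dlt S j.
Proof.
rewrite /NS -(rsum_pred1 j (dlt S j)) -rsum_sub; apply: rsum_ext => i.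
rewrite /dlt in_setU1; case: (eqVneq i j) => [->|hij] /=.
  by rewrite andbF; case: (_ && _); lra.
by rewrite Rminus_0_r.
Qed.

Lemma dlt01 n (S : {set 'I_n.+1}) j : dlt S j * dlt S j = dlt S j.
Proof. rewrite /dlt; case: (_ && _); lra. Qed.

Lemma step_NS n (s : Sn n.+1) S :
  step (fun _ S => NS S) s S = (1 - / INR n.+1) * NS S.
Proof.
rewrite /step (rsum_ext (fun j => NS_add j S)) rsum_sub rsum_const card_ord -/(NS S).
have := INR_pos n => h; field; lra.
Qed.

Lemma step_NS2 n (s : Sn n.+1) S :
  step (fun _ S => NS S * NS S) s S =
  (1 - 2 * / INR n.+1) * (NS S * NS S) + / INR n.+1 * NS S.
Proof.
rewrite /step (rsum_ext (g := fun j => NS S * NS S + ((-2 * NS S) * dlt S j + dlt S j))); last first.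
  by move=> j; rewrite NS_add; have := dlt01 S j; lra.
rewrite rsum_add rsum_add rsum_const rsum_scal card_ord -/(NS S).
have := INR_pos n => h; field; lra.
Qed.

Lemma W_NS n k (s : Sn n.+1) S :
  W k (fun _ S => NS S) s S = (1 - / INR n.+1) ^ k * NS S.
Proof.
elim: k s S => [|k IH] s S; first by rewrite /=; ring.
rewrite W_last (@W_ext _ _ _ (fun _ S => (1 - / INR n.+1) * NS S)); last exact: step_NS.
rewrite W_scal IH /=; ring.
Qed.

Lemma W_NS2 n k (s : Sn n.+1) S :
  W k (fun _ S => NS S * NS S) s S =
  (1 - 2 * / INR n.+1) ^ k * (NS S * NS S) + ((1 - / INR n.+1) ^ k - (1 - 2 * / INR n.+1) ^ k) * NS S.
Proof.
elim: k s S => [|k IH] s S; first by rewrite /=; ring.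
rewrite W_last (@W_ext _ _ _ (fun _ S => (1 - 2 * / INR n.+1) * (NS S * NS S) + / INR n.+1 * NS S)); last exact: step_NS2.
rewrite W_add W_scal W_scal IH W_NS /=; ring.
Qed.

Lemma NS0 n : NS (set0 : {set 'I_n.+1}) = INR n.
Proof.
rewrite /NS (rsum_ext (g := fun i => 1 - (if i == ord0 then 1 else 0))); last first.
  by move=> i; rewrite /dlt in_set0 andbT; case: eqP => _ /=; lra.
rewrite rsum_sub rsum_const rsum_pred1 card_ord S_INR; ring.
Qed.

Definition Fx n (s : Sn n.+1) : R := rsum (fun i => if (i != ord0) && (s i == i) then 1 else 0).
Definition myRleb (x y : R) : bool := if Rle_dec x y then true else false.
Definition Aset n (m : R) : {set Sn n.+1} := finset (fun s : Sn n.+1 => myRleb m (Fx s)).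
Arguments Aset {n}.
Definition gA n (m : R) (s : Sn n.+1) : R := if s \in Aset m then 1 else 0.
Definition Inv n (s : Sn n.+1) (S : {set 'I_n.+1}) := forall i, i != ord0 -> i \notin S -> s i = i.

Lemma Inv_step n (s : Sn n.+1) S j : Inv s S -> Inv (s * tau j)%g (j |: S).
Proof.
move=> H i hi; rewrite in_setU1 negb_or => /andP [hij hiS].
rewrite permM H // /tau tpermD // eq_sym //.
Qed.

Lemma Inv_NS n (s : Sn n.+1) S : Inv s S -> NS S <= Fx s.
Proof.
move=> H; apply: rsum_le => i; rewrite /dlt.
case: (boolP (i != ord0)) => hi //=; last lra.
case: (boolP (i \in S)) => hS /=.
  by case: (_ == _); lra.
by rewrite H // eqxx; lra.
Qed.

Lemma gA_bound n (m mu : R) (s : Sn n.+1) S : 0 < m < mu -> Inv s S ->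
  1 - / ((mu - m) * (mu - m)) * ((NS S - mu) * (NS S - mu)) <= gA m s.
Proof.
move=> [hm hmu] hI; have hN := Inv_NS hI.
have hp : 0 < (mu - m) * (mu - m) by nra.
rewrite /gA /Aset inE /myRleb; case: Rle_dec => h /=.
  have : 0 <= / ((mu - m) * (mu - m)) * ((NS S - mu) * (NS S - mu)).
    apply: Rmult_le_pos; [apply: Rlt_le; exact: Rinv_0_lt_compat | exact: Rle_0_sqr].
  lra.
have h1 : (mu - m) * (mu - m) <= (NS S - mu) * (NS S - mu) by nra.
have : 1 <= / ((mu - m) * (mu - m)) * ((NS S - mu) * (NS S - mu)).
  rewrite -(Rinv_l ((mu - m) * (mu - m))); last lra.
  apply: Rmult_le_compat_l => //; apply: Rlt_le; exact: Rinv_0_lt_compat.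
lra.
Qed.

Lemma Ek_lower n k (m mu : R) : 0 < m < mu ->
  1 - / ((mu - m) * (mu - m)) *
    ((1 - 2 * / INR n.+1) ^ k * (INR n * INR n) + ((1 - / INR n.+1) ^ k - (1 - 2 * / INR n.+1) ^ k) * INR n
     - 2 * mu * ((1 - / INR n.+1) ^ k * INR n) + mu * mu)
  <= Ek k (@gA n m).
Proof.
move=> hm; rewrite Ek_W.
set c := / ((mu - m) * (mu - m)).
have hI0 : Inv (1%g : Sn n.+1) set0 by move=> i _ _; rewrite perm1.
have HW := @W_mono n k (@Inv n) (fun _ S => 1 - c * ((NS S - mu) * (NS S - mu)))
  (fun s _ => gA m s) (fun s S j => @Inv_step n s S j) (fun s S hI => gA_bound hm hI) 1%g set0 hI0.
apply: Rle_trans HW.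
rewrite (@W_ext _ _ _ (fun _ S => (1 - c * (mu * mu)) + ((2 * c * mu) * NS S + (- c) * (NS S * NS S)))); last first.
  by move=> s S /=; ring.
rewrite W_add W_const W_add W_scal W_scal W_NS W_NS2 NS0.
apply: Req_le; ring.
Qed.

Lemma cv_ext (a b : nat -> R) l : (forall N, a N = b N) -> Un_cv a l -> Un_cv b l.
Proof. move=> H h eps he; case: (h eps he) => N hN; exists N => m hm; rewrite -H; exact: hN. Qed.

Lemma cv_const c : Un_cv (fun _ => c) c.
Proof. move=> eps he; exists 0%nat => m _; rewrite /R_dist Rminus_diag Rabs_R0; lra. Qed.

Lemma inf_ext (f g : nat -> R) l : (forall k, f k = g k) -> infinite_sum f l -> infinite_sum g l.
Proof.
move=> H h; change (Un_cv (fun N => sum_f_R0 g N) l).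
apply: (cv_ext (a := fun N => sum_f_R0 f N)) => // N; apply: sum_eq => i _; exact: H.
Qed.

Lemma inf_scal (f : nat -> R) l c : infinite_sum f l -> infinite_sum (fun k => c * f k) (c * l).
Proof.
move=> h; change (Un_cv (fun N => sum_f_R0 (fun k => c * f k) N) (c * l)).
apply: (cv_ext (a := fun N => c * sum_f_R0 f N)).
  move=> N; rewrite scal_sum; apply: sum_eq => i _; ring.
exact: (CV_mult _ _ _ _ (cv_const c) h).
Qed.

Lemma inf_add (f g : nat -> R) l1 l2 : infinite_sum f l1 -> infinite_sum g l2 ->
  infinite_sum (fun k => f k + g k) (l1 + l2).
Proof.
move=> h1 h2; change (Un_cv (fun N => sum_f_R0 (fun k => f k + g k) N) (l1 + l2)).
apply: (cv_ext (a := fun N => sum_f_R0 f N + sum_f_R0 g N)).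
  by move=> N; rewrite sum_plus.
exact: (CV_plus _ _ _ _ h1 h2).
Qed.

Lemma inf_le (f g : nat -> R) l1 l2 : (forall k, f k <= g k) -> infinite_sum f l1 -> infinite_sum g l2 ->
  l1 <= l2.
Proof.
move=> H h1 h2.
have H' : forall N, sum_f_R0 f N <= sum_f_R0 g N.
  move=> N; apply: sum_Rle => i _; exact: H.
exact: (Rle_cv_lim H' h1 h2).
Qed.

Lemma cv_rsum (T : finType) (u : T -> nat -> R) (L : T -> R) :
  (forall x, Un_cv (u x) (L x)) -> Un_cv (fun N => rsum (fun x => u x N)) (rsum L).
Proof.
move=> H; rewrite /rsum.
elim: (index_enum T) => [|a r IH].
  rewrite big_nil; apply: (cv_ext (a := fun _ => R0)); last exact: cv_const.
  by move=> N; rewrite big_nil.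
rewrite big_cons; apply: (cv_ext (a := fun N => u a N + \big[Rplus/R0]_(x <- r) u x N)).
  by move=> N; rewrite big_cons.
exact: CV_plus.
Qed.

Lemma sum_rsum (T : finType) (F : T -> nat -> R) N :
  sum_f_R0 (fun k => rsum (fun x => F x k)) N = rsum (fun x => sum_f_R0 (F x) N).
Proof.
elim: N => [|N IH] /=; first by apply: rsum_ext.
by rewrite IH -rsum_add.
Qed.

Lemma inf_rsum (T : finType) (F : T -> nat -> R) (L : T -> R) :
  (forall x, infinite_sum (F x) (L x)) -> infinite_sum (fun k => rsum (fun x => F x k)) (rsum L).
Proof.
move=> H; change (Un_cv (fun N => sum_f_R0 (fun k => rsum (fun x => F x k)) N) (rsum L)).
apply: (cv_ext (a := fun N => rsum (fun x => sum_f_R0 (F x) N))).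
  by move=> N; rewrite sum_rsum.
apply: cv_rsum => x; exact: H.
Qed.

Definition pois (t : R) (k : nat) := exp (- t) * (t ^ k / INR (Factorial.fact k)).

Lemma pois_series t a : infinite_sum (fun k => pois t k * a ^ k) (exp (- t) * exp (t * a)).
Proof.
have h : exp_in (t * a) (exp (t * a)) by rewrite /exp; case: (exist_exp (t * a)).
apply: (inf_ext (f := fun k => exp (- t) * (/ INR (Factorial.fact k) * (t * a) ^ k))).
  move=> k; rewrite /pois Rpow_mult_distr; rewrite /Rdiv; ring.
exact: inf_scal.
Qed.

Lemma pois_nonneg t k : 0 <= t -> 0 <= pois t k.
Proof.
move=> ht; rewrite /pois; apply: Rmult_le_pos; first exact: Rlt_le (exp_pos _).
apply: Rmult_le_pos; first exact: pow_le.
apply: Rlt_le; apply: Rinv_0_lt_compat; apply: lt_0_INR; exact: Factorial.lt_O_fact.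
Qed.

Lemma q_nonneg n (x : Sn n.+1) : 0 <= q_ttr x.
Proof.
rewrite q_ttrE; case: ifP => _; last lra.
apply: Rlt_le; apply: Rinv_0_lt_compat; exact: INR_pos.
Qed.

Lemma P_nonneg n k (x : Sn n.+1) : 0 <= convpow (@q_ttr n.+1) k x.
Proof.
elim: k x => [|k IH] x /=.
  rewrite /delta1; case: ifP => _; lra.
rewrite /conv; apply: rsum_nonneg => y; apply: Rmult_le_pos => //; exact: q_nonneg.
Qed.

Lemma P_sum n k : rsum (convpow (@q_ttr n.+1) k) = 1.
Proof.
have := Ek_W k (fun _ : Sn n.+1 => 1); rewrite W_const /Ek => <-.
apply: rsum_ext => x; ring.
Qed.

Lemma rsum_ge_term (T : finType) (f : T -> R) (x : T) : (forall y, 0 <= f y) -> f x <= rsum f.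
Proof.
move=> H; rewrite -(rsum_pred1 x (f x)); apply: rsum_le => y.
case: eqP => [->|_]; [lra|exact: H].
Qed.

Lemma P_le1 n k (x : Sn n.+1) : convpow (@q_ttr n.+1) k x <= 1.
Proof. rewrite -(P_sum n k); apply: rsum_ge_term => y; exact: P_nonneg. Qed.

Lemma heat_spec n t (x : Sn n.+1) : 0 <= t ->
  infinite_sum (fun k => pois t k * convpow (@q_ttr n.+1) k x) (heat (@q_ttr n.+1) t x).
Proof.
move=> ht; rewrite /heat; apply: epsilon_spec.
have hB : { l | Un_cv (fun N => sum_f_R0 (fun k => pois t k) N) l }.
  exists (exp (- t) * exp (t * 1)).
  apply: (inf_ext (f := fun k => pois t k * 1 ^ k)); last exact: pois_series.
  by move=> k; rewrite pow1 Rmult_1_r.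
have [l hl] := Rseries_CV_comp (fun k => pois t k * convpow (@q_ttr n.+1) k x) _
  (fun k => conj (Rmult_le_pos _ _ (pois_nonneg k ht) (P_nonneg k x))
    (Rle_trans _ _ _ (Rmult_le_compat_l _ _ _ (pois_nonneg k ht) (P_le1 k x)) (Req_le _ _ (Rmult_1_r _)))) hB.
by exists l.
Qed.

Lemma inf_zero : infinite_sum (fun _ => 0) 0.
Proof.
move=> eps he; exists 0%nat => m _.
have -> : sum_f_R0 (fun _ => 0) m = 0 by elim: m => [|m IH] //=; rewrite IH; ring.
rewrite /R_dist Rminus_diag Rabs_R0; lra.
Qed.

Lemma msr_heat n t (A : {set Sn n.+1}) : 0 <= t ->
  infinite_sum (fun k => pois t k * Ek k (fun x => if x \in A then 1 else 0))
    (msr (heat (@q_ttr n.+1) t) A).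
Proof.
move=> ht; rewrite /msr.
apply: (inf_ext (f := fun k => rsum (fun x => if x \in A then pois t k * convpow (@q_ttr n.+1) k x else 0))).
  move=> k; rewrite /Ek -rsum_scal; apply: rsum_ext => x; case: (_ \in _); ring.
apply: inf_rsum => x; case: (x \in A); first exact: heat_spec.
exact: inf_zero.
Qed.

Lemma Ek_ind_le1 n k (A : {set Sn n.+1}) : Ek k (fun x => if x \in A then 1 else 0) <= 1.
Proof.
rewrite /Ek; apply: (Rle_trans _ (rsum (fun x => convpow (@q_ttr n.+1) k x * 1))).
  apply: rsum_le => x.
  case: (_ \in _); rewrite ?Rmult_1_r ?Rmult_0_r; [exact: Rle_refl | exact: P_nonneg].
rewrite (rsum_ext (fun x => Rmult_1_r _)) P_sum; exact: Rle_refl.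
Qed.

Lemma Ek_ind_ge0 n k (A : {set Sn n.+1}) : 0 <= Ek k (fun x => if x \in A then 1 else 0).
Proof.
rewrite /Ek; apply: rsum_nonneg => x.
case: (_ \in _); rewrite ?Rmult_1_r ?Rmult_0_r; [exact: P_nonneg | exact: Rle_refl].
Qed.

Lemma msr_heat_le1 n t (A : {set Sn n.+1}) : 0 <= t -> msr (heat (@q_ttr n.+1) t) A <= 1.
Proof.
move=> ht; have h1 := msr_heat A ht.
have h2 := pois_series t 1.
have e1 : exp (- t) * exp (t * 1) = 1 by rewrite -exp_plus Rmult_1_r Rplus_opp_l exp_0.
rewrite -[X in _ <= X]e1.
apply: (inf_le _ h1 h2) => k; rewrite pow1.
apply: Rmult_le_compat_l; [exact: pois_nonneg | exact: Ek_ind_le1].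
Qed.

Lemma msr_heat_ge0 n t (A : {set Sn n.+1}) : 0 <= t -> 0 <= msr (heat (@q_ttr n.+1) t) A.
Proof.
move=> ht; have h1 := msr_heat A ht.
have h2 := inf_zero.
apply: (inf_le _ h2 h1) => k.
apply: Rmult_le_pos; [exact: pois_nonneg | exact: Ek_ind_ge0].
Qed.

Lemma heat_lower n t : 0 <= t ->
  0 < INR n * (exp (- t) * exp (t * (1 - / INR n.+1))) ->
  1 - 4 / (INR n * (exp (- t) * exp (t * (1 - / INR n.+1))))
  <= msr (heat (@q_ttr n.+1) t) (Aset (INR n * (exp (- t) * exp (t * (1 - / INR n.+1))) / 2)).
Proof.
set Ea := exp (- t) * exp (t * (1 - / INR n.+1)).
set mu := INR n * Ea.
move=> ht hmu.
have hm : 0 < mu / 2 < mu by lra.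
set m := mu / 2.
set c := / ((mu - m) * (mu - m)).
set a := 1 - / INR n.+1.
set b := 1 - 2 * / INR n.+1.
set nn := INR n.
have h1 := msr_heat (@Aset n m) ht.
have hE1 := pois_series t 1.
have hEa := pois_series t a.
have hEb := pois_series t b.
have h2 := inf_add (inf_scal (1 - c * mu * mu) hE1)
   (inf_add (inf_scal (c * nn - c * nn * nn) hEb) (inf_scal (2 * c * mu * nn - c * nn) hEa)).
have h3 : infinite_sum (fun k => pois t k *
  (1 - c * (b ^ k * (nn * nn) + (a ^ k - b ^ k) * nn - 2 * mu * (a ^ k * nn) + mu * mu)))
  ((1 - c * mu * mu) * (exp (- t) * exp (t * 1)) +
     ((c * nn - c * nn * nn) * (exp (- t) * exp (t * b)) +
      (2 * c * mu * nn - c * nn) * (exp (- t) * exp (t * a)))).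
  by apply: (inf_ext _ h2) => k; rewrite pow1; ring.
have h4 := inf_le _ h3 h1.
apply: Rle_trans (h4 _) => [|k]; last first.
  apply: Rmult_le_compat_l; [exact: pois_nonneg | exact: (Ek_lower n k hm)].
have e1 : exp (- t) * exp (t * 1) = 1 by rewrite -exp_plus Rmult_1_r Rplus_opp_l exp_0.
have eb : exp (- t) * exp (t * b) = Ea * Ea.
  rewrite /Ea -!exp_plus; congr exp; rewrite /b; ring.
rewrite e1 eb -/Ea.
have hEa0 : 0 < Ea by apply: Rmult_lt_0_compat; apply: exp_pos.
have emu : mu = nn * Ea by [].
have hnn : 0 < nn by nra.
have -> : (1 - c * mu * mu) * 1 + ((c * nn - c * nn * nn) * (Ea * Ea) + (2 * c * mu * nn - c * nn) * Ea)
   = 1 - 4 / mu + c * nn * Ea * Ea.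
  rewrite /c /m /mu /nn; have hmu2 : 0 < INR n * Ea := hmu. have hnn2 : 0 < INR n := hnn. field; repeat split; lra.
have : 0 <= c * nn * Ea * Ea.
  apply: Rmult_le_pos; last lra. apply: Rmult_le_pos; last lra.
  apply: Rmult_le_pos; last lra. rewrite /c /m; apply: Rlt_le; apply: Rinv_0_lt_compat; apply: Rmult_lt_0_compat; lra.
lra.
Qed.

Lemma card_pos (T : finType) (x : T) : 0 < INR #|[set: T]|.
Proof.
apply: lt_0_INR; apply/ltP; apply/card_gt0P; exists x; by rewrite inE.
Qed.

Lemma cnt n (i : 'I_n.+1) :
  INR n.+1 * rsum (fun x : Sn n.+1 => if x i == i then 1 else 0) = INR #|[set: Sn n.+1]|.
Proof.
have H j : rsum (fun x : Sn n.+1 => if x i == j then 1 else 0) = rsum (fun x : Sn n.+1 => if x i == i then 1 else 0).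
  rewrite -(@rsum_reindex _ (fun x => x * tperm i j)%g); last first.
    by exists (fun x => x * tperm i j)%g => x; rewrite -mulgA tperm2 mulg1.
  apply: rsum_ext => x; rewrite permM.
  by rewrite -[X in _ == X](tpermL i j) (inj_eq (@perm_inj _ _)).
transitivity (rsum (fun j : 'I_n.+1 => rsum (fun x : Sn n.+1 => if x i == j then 1 else 0))).
  by rewrite (rsum_ext H) rsum_const card_ord.
rewrite rsum_swap cardsT.
rewrite (rsum_ext (g := fun _ => 1)); last first.
  move=> x; rewrite (rsum_ext (g := fun j => if j == x i then 1 else 0)) ?rsum_pred1 //.
  by move=> j; rewrite eq_sym.
by rewrite rsum_const Rmult_1_r.
Qed.

Lemma unif_F n : rsum (fun x : Sn n.+1 => unif x * Fx x) <= 1.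
Proof.
have hG : 0 < INR #|[set: Sn n.+1]| := card_pos (1%g : Sn n.+1).
have hN := INR_pos n.
rewrite /unif rsum_scal.
apply: (Rle_trans _ (/ INR #|[set: Sn n.+1]| * INR #|[set: Sn n.+1]|)); last by rewrite Rinv_l; lra.
apply: Rmult_le_compat_l; first by apply: Rlt_le; apply: Rinv_0_lt_compat.
rewrite /Fx.
apply: (Rle_trans _ (rsum (fun x : Sn n.+1 => rsum (fun i => if x i == i then 1 else 0)))).
  apply: rsum_le => x; apply: rsum_le => i; case: (_ != _); case: (_ == _) => /=; lra.
rewrite rsum_swap.
rewrite (rsum_ext (g := fun _ => INR #|[set: Sn n.+1]| / INR n.+1)); last first.
  move=> i; rewrite -(cnt i) /Rdiv (Rmult_comm (INR n.+1)) Rmult_assoc Rinv_r; [by rewrite Rmult_1_r | lra].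
apply: Rle_trans (Req_le _ _ (rsum_const _ _)) _.
rewrite card_ord; apply: Req_le; field; lra.
Qed.

Lemma unif_A n m : 0 < m -> msr (@unif n.+1) (Aset m) <= / m.
Proof.
move=> hm.
have hG : 0 < INR #|[set: Sn n.+1]| := card_pos (1%g : Sn n.+1).
have hu : forall x : Sn n.+1, 0 < unif x by move=> x; rewrite /unif; apply: Rinv_0_lt_compat.
have hF : forall x : Sn n.+1, 0 <= Fx x.
  by move=> x; apply: rsum_nonneg => i; case: (_ && _); lra.
apply: (Rle_trans _ (rsum (fun x => / m * (unif x * Fx x)))).
  apply: rsum_le => x; rewrite /Aset inE /myRleb; case: Rle_dec => h.
    have hx := hu x.
    rewrite -[X in X <= _](Rmult_1_l (unif x)) -(Rinv_l m); last lra.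
    rewrite Rmult_assoc; apply: Rmult_le_compat_l.
      by apply: Rlt_le; apply: Rinv_0_lt_compat.
    rewrite (Rmult_comm m); apply: Rmult_le_compat_l; lra.
  apply: Rmult_le_pos; first by apply: Rlt_le; apply: Rinv_0_lt_compat.
  apply: Rmult_le_pos; [apply: Rlt_le; exact: hu | exact: hF].
rewrite rsum_scal; rewrite -[X in _ <= X]Rmult_1_r.
apply: Rmult_le_compat_l; first by apply: Rlt_le; apply: Rinv_0_lt_compat.
exact: unif_F.
Qed.

Lemma foldr_max_ge (T : eqType) (f : T -> R) d (s : seq T) x :
  x \in s -> f x <= foldr Rmax d (map f s).
Proof.
elim: s => [|a s IH] //= ; rewrite in_cons => /orP [/eqP ->|hx].
  exact: Rmax_l.
apply: Rle_trans (IH hx) _; exact: Rmax_r.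
Qed.

Lemma foldr_max_le (T : Type) (f : T -> R) d (s : seq T) b :
  d <= b -> (forall x, f x <= b) -> foldr Rmax d (map f s) <= b.
Proof.
move=> hd hf; elim: s => [|a s IH] //=; exact: Rmax_lub.
Qed.

Lemma tv_ge (T : finType) (p u : T -> R) (A : {set T}) : msr p A - msr u A <= tv p u.
Proof.
rewrite /tv; apply: (@foldr_max_ge _ (fun A : {set T} => msr p A - msr u A)).
by rewrite mem_enum inE.
Qed.

Lemma tv_le1 (T : finType) (p u : T -> R) :
  (forall B, msr p B <= 1) -> (forall B, 0 <= msr u B) -> tv p u <= 1.
Proof.
move=> hp hu; rewrite /tv; apply: foldr_max_le.
  have := hp set0; have := hu set0; lra.
move=> B; have := hp B; have := hu B; lra.
Qed.

Lemma dist2_ge (T : finType) (p u : T -> R) (A : {set T}) (v : R) (x0 : T) :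
  (forall x, u x = / INR #|[set: T]|) -> 0 < v -> msr u A <= v ->
  (msr p A - msr u A) * (msr p A - msr u A) / v <=
  INR #|[set: T]| * rsum (fun x => Rsqr (Rabs (p x - u x))).
Proof.
move=> hu hv hA.
have hG : 0 < INR #|[set: T]| := card_pos x0.
move: hu hG; set G := INR #|[set: T]|; clearbody G => hu hG.
have ec : exists c, c = (msr p A - msr u A) / (G * v) by eexists.
case: ec => c ec.
have H1 : rsum (fun x => 2 * c * (if x \in A then p x else 0) - 2 * c * (if x \in A then u x else 0)
            - c * c * G * (if x \in A then u x else 0)) <= rsum (fun x => Rsqr (Rabs (p x - u x))).
  apply: rsum_le => x; rewrite -Rsqr_abs /Rsqr.
  case: (x \in A) => /=; last by rewrite !Rmult_0_r !Rminus_0_r; exact: Rle_0_sqr.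
  have e : c * c * G * u x = c * c by rewrite hu; field; lra.
  rewrite e; have := Rle_0_sqr (p x - u x - c); rewrite /Rsqr => h; nra.
rewrite rsum_sub rsum_sub !rsum_scal -/(msr p A) -/(msr u A) in H1.
apply: Rle_trans (Rmult_le_compat_l _ _ _ (Rlt_le _ _ hG) H1).
move: H1 ec hA; set P := msr p A; set U := msr u A => H1 ec hA.
have hcc : 0 <= c * c * G by apply: Rmult_le_pos; [nra | lra].
apply: (Rle_trans _ (G * (2 * c * (P - U) - c * c * G * v))).
  apply: Req_le; rewrite ec; field; lra.
apply: Rmult_le_compat_l; first lra.
nra.
Qed.

Definition mu_at (n : nat) (t : R) := INR n * (exp (- t) * exp (t * (1 - / INR n.+1))).

Lemma main_bounds n t : 0 <= t -> 12 <= mu_at n t ->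
  (1 - 6 / mu_at n t <= tv (heat (@q_ttr n.+1) t) (@unif n.+1) <= 1) /\
  sqrt (mu_at n t / 8) <= dist2 (heat (@q_ttr n.+1) t) (@unif n.+1).
Proof.
move=> ht hmu.
have hmu0 : 0 < mu_at n t by lra.
have hL := heat_lower ht hmu0.
rewrite -/(mu_at n t) in hL.
have hm : 0 < mu_at n t / 2 by lra.
have hU := unif_A n hm.
move: hL hU hmu hmu0 hm.
set mu := mu_at n t; set A := Aset (mu / 2); clearbody mu A => hL hU hmu hmu0 hm.
have hU' : msr (@unif n.+1) A <= 2 / mu.
  apply: Rle_trans hU _; apply: Req_le; field; lra.
have hD : 1 - 6 / mu <= msr (heat (@q_ttr n.+1) t) A - msr (@unif n.+1) A.
  have : 6 / mu = 4 / mu + 2 / mu by field; lra.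
  lra.
split; first split.
- apply: Rle_trans hD (tv_ge _ _ A).
- apply: tv_le1 => B; first exact: msr_heat_le1.
  apply: rsum_nonneg => x; case: (_ \in _); last lra.
  apply: Rlt_le; rewrite /unif; apply: Rinv_0_lt_compat; exact: card_pos x.
- have hv : 0 < 2 / mu by apply: Rdiv_lt_0_compat; lra.
  have H := dist2_ge (heat (@q_ttr n.+1) t) (1%g : Sn n.+1) (fun x => erefl) hv hU'.
  rewrite /dist2; apply: sqrt_le_1_alt; apply: Rle_trans H.
  move: hD; set D := msr (heat (@q_ttr n.+1) t) A - msr (@unif n.+1) A => hD.
  have hD2 : 1 / 2 <= D.
    have : 6 / mu <= 1 / 2.
      apply: (Rmult_le_reg_r mu); first lra.
      rewrite /Rdiv Rmult_assoc Rinv_l; lra.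
    lra.
  have e : D * D / (2 / mu) = D * D * mu / 2 by field; lra.
  rewrite e; clearbody D.
  have h4 : 1 / 4 <= D * D by nra.
  nra.
Qed.

Lemma mu_large (k : nat -> R) : (forall n, 0 <= k n) ->
  cv_infty (fun n => - ((k n - INR n * ln (INR n)) / INR n)) ->
  forall B, exists N0, le 2 N0 /\ forall n, le N0 n.+1 -> B < mu_at n (k n.+1).
Proof.
move=> hk hcv B; case: (hcv (2 * B)) => Nh HN.
exists (Nat.max Nh 2); split; first lia.
move=> n hn.
have hL := HN n.+1 ltac:(lia).
move: hL; set L := - _ => hL.
have hn1 : 1 <= INR n by rewrite -INR_1; apply: le_INR; lia.
have eN : INR n.+1 = INR n + 1 by rewrite S_INR.
have hN : 0 < INR n.+1 by rewrite eN; lra.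
have eE : exp (- k n.+1) * exp (k n.+1 * (1 - / INR n.+1)) = exp L / INR n.+1.
  rewrite -exp_plus.
  have -> : - k n.+1 + k n.+1 * (1 - / INR n.+1) = L + - ln (INR n.+1).
    rewrite /L; field; lra.
  rewrite exp_plus exp_Ropp exp_ln //; field; lra.
rewrite /mu_at eE eN.
have hE := exp_ineq1_le L.
have hE0 := exp_pos L.
move: hE hE0; set E := exp L => hE hE0.
have e : INR n * (E / (INR n + 1)) - E / 2 = E * (INR n - 1) / (2 * (INR n + 1)) by field; lra.
have : 0 <= E * (INR n - 1) / (2 * (INR n + 1)).
  apply: Rmult_le_pos; first nra.
  apply: Rlt_le; apply: Rinv_0_lt_compat; lra.
lra.
Qed.

Unset Implicit Arguments.
Theorem corollary3p3 (k : nat -> R) :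
  (forall n, 0 <= k n) ->
  cv_infty (fun n => - ((k n - INR n * ln (INR n)) / INR n)) ->
  cv_infty (fun n => dist2 (heat (@q_ttr n) (k n)) (@unif n)) /\
  Un_cv (fun n => tv (heat (@q_ttr n) (k n)) (@unif n)) 1.
Proof.
move=> hk hcv; split.
- move=> M; case: (mu_large hk hcv (Rmax 12 (8 * (M * M + 1)))) => N0 [h2 HN].
  exists N0 => n' hn'; case: n' hn' => [|n] hn; first lia.
  have hmu := HN n hn.
  have hm1 := Rmax_l 12 (8 * (M * M + 1)).
  have hm2 := Rmax_r 12 (8 * (M * M + 1)).
  have [_ hd] := @main_bounds n (k n.+1) (hk n.+1) ltac:(lra).
  apply: Rlt_le_trans hd.
  apply: Rle_lt_trans (Rle_abs M) _; rewrite -sqrt_Rsqr_abs; apply: sqrt_lt_1_alt.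
  split; first exact: Rle_0_sqr.
  rewrite /Rsqr; lra.
- move=> eps he; case: (mu_large hk hcv (Rmax 12 (6 / eps))) => N0 [h2 HN].
  exists N0 => n' hn'; case: n' hn' => [|n] hn; first lia.
  have hmu := HN n hn.
  have hm1 := Rmax_l 12 (6 / eps).
  have hm2 := Rmax_r 12 (6 / eps).
  have [[h1 h1'] _] := @main_bounds n (k n.+1) (hk n.+1) ltac:(lra).
  move: h1 h1' hmu; set mu := mu_at n (k n.+1); set T := tv _ _ => h1 h1' hmu.
  have h6 : 6 / mu < eps.
    apply: (Rmult_lt_reg_r mu); first lra.
    have -> : 6 / mu * mu = 6 by field; lra.
    have : 6 / eps * eps = 6 by field; lra.
    nra.
  rewrite /R_dist; apply: Rabs_def1; lra.
Qed.
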